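(* Let $\gamma_1,\gamma_2,\gamma_3\in\mathbb{R}$ with $\gamma_3<0$ and $\gamma_1\ge 2|\gamma_3|$, $\gamma_2\ge 2|\gamma_3|$, and let $\mathcal{L}(X)=\frac12\sum_{k=1}^3\gamma_k(\sigma_kX\sigma_k-X)$ on $\mathcal{M}_2$. Then $e^{t\mathcal{L}}$ is a unital Schwarz map for every $t\ge 0$.
   Context: $\sigma_1,\sigma_2,\sigma_3$ are the Pauli matrices. A unital Schwarz map on $\mathcal{M}_n$ is a linear map $\Phi$ with $\Phi(\mathbb{1})=\mathbb{1}$ and $\Phi(X^\dagger X)\ge\Phi(X)^\dagger\Phi(X)$ for all $X\in\mathcal{M}_n$. The generator $\mathcal{L}$ is self-dual with respect to the Hilbert–Schmidt inner product. *)

(* Defs.v *)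
From HB Require Import structures.
From mathcomp Require Import all_boot all_order all_algebra.
From mathcomp Require Import all_classical all_reals.
From mathcomp Require Import topology normedtype sequences.
From mathcomp Require Import complex.
Set Implicit Arguments. Unset Strict Implicit. Unset Printing Implicit Defensive.
Import Order.TTheory GRing.Theory Num.Theory.
Import numFieldNormedType.Exports.
Local Open Scope ring_scope.
Local Open Scope complex_scope.

Definition adj (R : realType) m n (X : 'M[R[i]]_(m, n)) : 'M[R[i]]_(n, m) :=
  (map_mx Num.conj X)^T.

Definition sigma1 (R : realType) : 'M[R[i]]_2 :=
  \matrix_(i < 2, j < 2) (if i != j then 1 else 0).
Definition sigma2 (R : realType) : 'M[R[i]]_2 :=
  \matrix_(i < 2, j < 2)
    (if (val i == 0%N) && (val j == 1%N) then - 'i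
     else if (val i == 1%N) && (val j == 0%N) then 'i else 0).
Definition sigma3 (R : realType) : 'M[R[i]]_2 :=
  \matrix_(i < 2, j < 2)
    (if i == j then (if val i == 0%N then 1 else -1) else 0).

Definition lindblad (R : realType) (g1 g2 g3 : R) (X : 'M[R[i]]_2) : 'M[R[i]]_2 :=
  (2%:R)^-1 *:
    (  (g1%:C) *: (sigma1 R *m X *m sigma1 R - X)
     + (g2%:C) *: (sigma2 R *m X *m sigma2 R - X)
     + (g3%:C) *: (sigma3 R *m X *m sigma3 R - X)).

Definition exp_partial (R : realType) (L : 'M[R[i]]_2 -> 'M[R[i]]_2)
    (t : R) (N : nat) (X : 'M[R[i]]_2) : 'M[R[i]]_2 :=
  \sum_(n < N) ((t ^+ n / (n`!)%:R)%:C) *: iter n L X.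

Definition expL (R : realType) (L : 'M[R[i]]_2 -> 'M[R[i]]_2) (t : R)
    (X : 'M[R[i]]_2) : 'M[R[i]]_2 :=
  \matrix_(i < 2, j < 2)
    ((limn (fun N => complex.Re (exp_partial L t N X i j)))
       +i* (limn (fun N => complex.Im (exp_partial L t N X i j)))).

(* positive semidefinite: <v, A v> >= 0 for all vectors v
   (order of the num-closed field R[i]: real and nonnegative) *)
Definition psdmx (R : realType) n (A : 'M[R[i]]_n) : Prop :=
  forall v : 'cV[R[i]]_n, 0 <= (adj v *m A *m v) 0 0.

Definition mx_ge (R : realType) n (A B : 'M[R[i]]_n) : Prop := psdmx (A - B).

Definition unital_schwarz (R : realType) (Phi : 'M[R[i]]_2 -> 'M[R[i]]_2) : Prop :=
  (forall (a : R[i]) (X Y : 'M[R[i]]_2), Phi (a *: X + Y) = a *: Phi X + Phi Y)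
  /\ Phi 1%:M = 1%:M
  /\ (forall X : 'M[R[i]]_2, mx_ge (Phi (adj X *m X)) (adj (Phi X) *m Phi X)).

(* Main.v *)
Require Import Defs.
From HB Require Import structures.
From mathcomp Require Import all_boot all_order all_algebra.
From mathcomp Require Import all_classical all_reals.
From mathcomp Require Import topology normedtype sequences exp.
From mathcomp Require Import complex.
From mathcomp Require Import ring lra.
Import Order.TTheory GRing.Theory Num.Theory.
Import numFieldNormedType.Exports.
Set Implicit Arguments. Unset Strict Implicit. Unset Printing Implicit Defensive.
Local Open Scope classical_set_scope.
Local Open Scope ring_scope.
Local Open Scope complex_scope.
Local Notation Re := complex.Re.
Local Notation Im := complex.Im.

Section S.
Variable R : realType.
Implicit Types x y : R[i].
Lemma ReD x y : Re (x + y) = Re x + Re y. Proof. by case: x => ? ?; case: y. Qed.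
Lemma ImD x y : Im (x + y) = Im x + Im y. Proof. by case: x => ? ?; case: y. Qed.
Lemma ReN x : Re (- x) = - Re x. Proof. by case: x. Qed.
Lemma ImN x : Im (- x) = - Im x. Proof. by case: x. Qed.
Lemma ReM x y : Re (x * y) = Re x * Re y - Im x * Im y. Proof. by case: x => ? ?; case: y. Qed.
Lemma ImM x y : Im (x * y) = Re x * Im y + Im x * Re y. Proof. by case: x => a b; case: y => c d /=; rewrite addrC. Qed.
Lemma ReJ x : Re (Num.conj x) = Re x. Proof. by case: x. Qed.
Lemma ImJ x : Im (Num.conj x) = - Im x. Proof. by case: x. Qed.
Lemma ReC (r : R) : Re (r%:C) = r. Proof. by []. Qed.
Lemma ImC (r : R) : Im (r%:C) = 0. Proof. by []. Qed.
Lemma Re_i : Re ('i : R[i]) = 0. Proof. by []. Qed.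
Lemma Im_i : Im ('i : R[i]) = 1. Proof. by []. Qed.
Lemma Re0 : Re (0 : R[i]) = 0. Proof. by []. Qed.
Lemma Im0 : Im (0 : R[i]) = 0. Proof. by []. Qed.
Lemma Re1 : Re (1 : R[i]) = 1. Proof. by []. Qed.
Lemma Im1 : Im (1 : R[i]) = 0. Proof. by []. Qed.
Lemma Re2V : Re ((2%:R)^-1 : R[i]) = 2^-1.
Proof. have -> : ((2%:R)^-1 : R[i]) = (2^-1)%:C by rewrite fmorphV /= rmorphMn. by []. Qed.
Lemma Im2V : Im ((2%:R)^-1 : R[i]) = 0.
Proof. have -> : ((2%:R)^-1 : R[i]) = (2^-1)%:C by rewrite fmorphV /= rmorphMn. by []. Qed.
Lemma cplx_eq x y : Re x = Re y -> Im x = Im y -> x = y.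
Proof. by case: x; case: y => /= ? ? ? ? -> ->. Qed.
Definition mx2 (a b c d : R[i]) : 'M[R[i]]_2 :=
  \matrix_(i < 2, j < 2) (if val i == 0%N then (if val j == 0%N then a else b)
                          else (if val j == 0%N then c else d)).
Lemma mx2E (X : 'M[R[i]]_2) :
  X = mx2 (X ord0 ord0) (X ord0 ord_max) (X ord_max ord0) (X ord_max ord_max).
Proof.
apply/matrixP => i j; rewrite mxE.
case: i => [[|[|//]] Hi]; case: j => [[|[|//]] Hj] /=. all: by f_equal; apply: val_inj.
Qed.
Lemma ord2P (i : 'I_2) : i = ord0 \/ i = ord_max.
Proof. case: i => [[|[|//]] Hi]; [left|right]; exact: val_inj. Qed.
Lemma lift00 : lift ord0 (ord0 : 'I_1) = ord_max :> 'I_2. Proof. exact: val_inj. Qed.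
Lemma mx2_00 a b c d : mx2 a b c d ord0 ord0 = a. Proof. by rewrite mxE. Qed.
Lemma mx2_01 a b c d : mx2 a b c d ord0 ord_max = b. Proof. by rewrite mxE. Qed.
Lemma mx2_10 a b c d : mx2 a b c d ord_max ord0 = c. Proof. by rewrite mxE. Qed.
Lemma mx2_11 a b c d : mx2 a b c d ord_max ord_max = d. Proof. by rewrite mxE. Qed.
Lemma sigma1E : sigma1 R = mx2 0 1 1 0.
Proof. by apply/matrixP => i j; rewrite !mxE; case: (ord2P i) => ->; case: (ord2P j) => ->. Qed.
Lemma sigma2E : sigma2 R = mx2 0 (-'i) 'i 0.
Proof. by apply/matrixP => i j; rewrite !mxE; case: (ord2P i) => ->; case: (ord2P j) => ->. Qed.
Lemma sigma3E : sigma3 R = mx2 1 0 0 (-1).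
Proof. by apply/matrixP => i j; rewrite !mxE; case: (ord2P i) => ->; case: (ord2P j) => ->. Qed.
Definition mx2E_all := (mx2_00, mx2_01, mx2_10, mx2_11).
Lemma mx2_eq (X Y : 'M[R[i]]_2) : X ord0 ord0 = Y ord0 ord0 -> X ord0 ord_max = Y ord0 ord_max ->
  X ord_max ord0 = Y ord_max ord0 -> X ord_max ord_max = Y ord_max ord_max -> X = Y.
Proof. by move=> h1 h2 h3 h4; apply/matrixP => i j; case: (ord2P i) => ->; case: (ord2P j) => ->. Qed.
Lemma mx2_mul a b c d a' b' c' d' :
  mx2 a b c d *m mx2 a' b' c' d' = mx2 (a*a' + b*c') (a*b'+b*d') (c*a'+d*c') (c*b'+d*d').
Proof. by apply: mx2_eq; rewrite !mxE !big_ord_recl !big_ord0 lift00 !mx2E_all !addr0. Qed.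
Lemma mx2_add a b c d a' b' c' d' :
  mx2 a b c d + mx2 a' b' c' d' = mx2 (a+a') (b+b') (c+c') (d+d').
Proof. by apply: mx2_eq; rewrite !mxE. Qed.
Lemma mx2_opp a b c d : - mx2 a b c d = mx2 (-a) (-b) (-c) (-d).
Proof. by apply: mx2_eq; rewrite !mxE. Qed.
Lemma mx2_scale k a b c d : k *: mx2 a b c d = mx2 (k*a) (k*b) (k*c) (k*d).
Proof. by apply: mx2_eq; rewrite !mxE. Qed.
Lemma mx2_one : (1%:M : 'M[R[i]]_2) = mx2 1 0 0 1.
Proof. by apply: mx2_eq; rewrite !mxE. Qed.
Lemma mx2_adj a b c d : adj (mx2 a b c d) = mx2 (Num.conj a) (Num.conj c) (Num.conj b) (Num.conj d).
Proof. by apply: mx2_eq; rewrite !mxE. Qed.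
Definition mx2_ops := (mx2_mul, mx2_add, mx2_opp, mx2_scale, mx2_adj).
Lemma mx2_congr a b c d a' b' c' d' : a = a' -> b = b' -> c = c' -> d = d' ->
  mx2 a b c d = mx2 a' b' c' d'.
Proof. by move=> -> -> -> ->. Qed.
Lemma ReiR : Re ('i%R : R[i]) = 0. Proof. by []. Qed.
Lemma ImiR : Im ('i%R : R[i]) = 1. Proof. by []. Qed.
Ltac cplx := apply cplx_eq; rewrite ?(ReD, ImD, ReN, ImN, ReM, ImM).
Ltac cplx2 := rewrite ?(ReiR, ImiR, Re_i, Im_i, Re2V, Im2V, Re0, Im0, Re1, Im1);
  rewrite ?(ReJ, ImJ, ReC, ImC).
Definition Qm (m0 m1 m2 m3 : R) (X : 'M[R[i]]_2) : 'M[R[i]]_2 :=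
  let a := X ord0 ord0 in let b := X ord0 ord_max in
  let c := X ord_max ord0 in let d := X ord_max ord_max in
  mx2 ((m0%:C + m3%:C)/2 * a + (m0%:C - m3%:C)/2 * d)
      ((m1%:C + m2%:C)/2 * b + (m1%:C - m2%:C)/2 * c)
      ((m1%:C - m2%:C)/2 * b + (m1%:C + m2%:C)/2 * c)
      ((m0%:C - m3%:C)/2 * a + (m0%:C + m3%:C)/2 * d).
Lemma two_neq0 : (2 : R[i]) != 0. Proof. by rewrite pnatr_eq0. Qed.
Lemma QmM m0 m1 m2 m3 n0 n1 n2 n3 X :
  Qm m0 m1 m2 m3 (Qm n0 n1 n2 n3 X) = Qm (m0 * n0) (m1 * n1) (m2 * n2) (m3 * n3) X.
Proof.
rewrite /Qm !mx2E_all !rmorphM; apply: mx2_congr; by field.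
Qed.
Lemma Qm1 X : Qm 1 1 1 1 X = X.
Proof.
rewrite [RHS]mx2E /Qm rmorph1; apply: mx2_congr; by field.
Qed.
Lemma QmD m0 m1 m2 m3 n0 n1 n2 n3 X :
  Qm m0 m1 m2 m3 X + Qm n0 n1 n2 n3 X = Qm (m0+n0) (m1+n1) (m2+n2) (m3+n3) X.
Proof.
rewrite /Qm mx2_add !rmorphD; apply: mx2_congr; by field.
Qed.
Lemma QmZ k m0 m1 m2 m3 X :
  (k%:C : R[i]) *: Qm m0 m1 m2 m3 X = Qm (k * m0) (k * m1) (k * m2) (k * m3) X.
Proof.
rewrite /Qm mx2_scale !rmorphM; apply: mx2_congr; by field.
Qed.
Lemma Qm0 X : Qm 0 0 0 0 X = 0.
Proof.
apply/matrixP => i j; rewrite /Qm [RHS]mxE rmorph0 mxE.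
by case: (ifP _) => _; case: (ifP _) => _; rewrite !(subr0, addr0, mul0r).
Qed.
Lemma QmlinX m0 m1 m2 m3 (k : R[i]) X Y :
  Qm m0 m1 m2 m3 (k *: X + Y) = k *: Qm m0 m1 m2 m3 X + Qm m0 m1 m2 m3 Y.
Proof.
rewrite /Qm mx2_scale mx2_add !mxE; apply: mx2_congr; ring.
Qed.
Lemma Qm_unit c1 c2 c3 : Qm 1 c1 c2 c3 1%:M = 1%:M.
Proof.
rewrite mx2_one /Qm !mx2E_all rmorph1; apply: mx2_congr; by field.
Qed.
Lemma lindbladQ (g1 g2 g3 : R) X :
  lindblad g1 g2 g3 X = Qm 0 (-(g2+g3)) (-(g1+g3)) (-(g1+g2)) X.
Proof.
rewrite [X]mx2E /Qm /lindblad sigma1E sigma2E sigma3E !mx2E_all !mx2_mul.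
rewrite !(mx2_opp, mx2_add, mx2_scale).
move: (X ord0 ord0) (X ord0 ord_max) (X ord_max ord0) (X ord_max ord_max) => a b c d.
rewrite !(mul0r, mulr0, mul1r, mulr1, add0r, addr0, sub0r, subr0, mulN1r, mulrN1, mulNr, mulrN, opprK).
apply: mx2_congr; apply cplx_eq.
all: rewrite !(ReD, ReN, ReM, ImD, ImN, ImM).
all: cplx2.
all: ring.
Qed.
Lemma iterQ (g1 g2 g3 : R) n X :
  iter n (lindblad g1 g2 g3) X =
  Qm (0 ^+ n) ((-(g2+g3)) ^+ n) ((-(g1+g3)) ^+ n) ((-(g1+g2)) ^+ n) X.
Proof.
elim: n => [|n IH]; first by rewrite !expr0 Qm1.
by rewrite iterS IH lindbladQ QmM !exprS.
Qed.
Definition Sx (t mu : R) (N : nat) : R := \sum_(n < N) (t ^+ n / (n`!)%:R) * mu ^+ n.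
Lemma exp_partialQ (g1 g2 g3 t : R) N X :
  exp_partial (lindblad g1 g2 g3) t N X =
  Qm (Sx t 0 N) (Sx t (-(g2+g3)) N) (Sx t (-(g1+g3)) N) (Sx t (-(g1+g2)) N) X.
Proof.
elim: N => [|N IH].
  by rewrite /exp_partial /Sx !big_ord0 Qm0.
rewrite /exp_partial /Sx !big_ord_recr /= -/(exp_partial _ _ _ _) IH iterQ QmZ QmD.
by [].
Qed.
Lemma Sx_cvg t mu : Sx t mu @ \oo --> expR (t * mu).
Proof.
have -> : Sx t mu = series (exp_coeff (t * mu)).
  apply/funext => N; rewrite /series /= big_mkord /Sx; apply: eq_bigr => k _.
  by rewrite /exp_coeff /= exprMn mulrAC.
exact: is_cvg_series_exp_coeff.
Qed.
Definition E0 X := Qm 1 0 0 0 X.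
Definition E1 X := Qm 0 1 0 0 X.
Definition E2 X := Qm 0 0 1 0 X.
Definition E3 X := Qm 0 0 0 1 X.
Lemma Qm_decomp m0 m1 m2 m3 X : Qm m0 m1 m2 m3 X =
  (m0%:C : R[i]) *: E0 X + (m1%:C : R[i]) *: E1 X + (m2%:C : R[i]) *: E2 X + (m3%:C : R[i]) *: E3 X.
Proof.
rewrite /E0 /E1 /E2 /E3 !QmZ !QmD.
by rewrite !mulr1 !mulr0 !addr0 !add0r.
Qed.
Lemma ReCM (r : R) (z : R[i]) : Re (r%:C * z) = r * Re z. Proof. by case: z => a b /=; rewrite mul0r subr0. Qed.
Lemma ImCM (r : R) (z : R[i]) : Im (r%:C * z) = r * Im z. Proof. by case: z => a b /=; rewrite mul0r addr0. Qed.
Lemma ReQ m0 m1 m2 m3 X i j : Re (Qm m0 m1 m2 m3 X i j) =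
  m0 * Re (E0 X i j) + m1 * Re (E1 X i j) + m2 * Re (E2 X i j) + m3 * Re (E3 X i j).
Proof. by rewrite Qm_decomp !mxE !ReD !ReCM. Qed.
Lemma ImQ m0 m1 m2 m3 X i j : Im (Qm m0 m1 m2 m3 X i j) =
  m0 * Im (E0 X i j) + m1 * Im (E1 X i j) + m2 * Im (E2 X i j) + m3 * Im (E3 X i j).
Proof. by rewrite Qm_decomp !mxE !ImD !ImCM. Qed.
Lemma cplx_eq' (a b : R) (z : R[i]) : a = Re z -> b = Im z -> a +i* b = z.
Proof. by case: z => ? ? /= -> ->. Qed.
Lemma lim4 t (r0 r1 r2 r3 mu1 mu2 mu3 : R) :
  limn (fun N => Sx t 0 N * r0 + Sx t mu1 N * r1 + Sx t mu2 N * r2 + Sx t mu3 N * r3) =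
  1 * r0 + expR (t * mu1) * r1 + expR (t * mu2) * r2 + expR (t * mu3) * r3.
Proof.
apply: cvg_lim; first exact: Rhausdorff.
have -> : (1 : R) = expR (t * 0) by rewrite mulr0 expR0.
apply: cvgD; [apply: cvgD; [apply: cvgD|]|]; apply: cvgM; (exact: Sx_cvg || exact: cvg_cst).
Qed.
Lemma expLQ (g1 g2 g3 t : R) X :
  expL (lindblad g1 g2 g3) t X =
  Qm 1 (expR (t * (-(g2+g3)))) (expR (t * (-(g1+g3)))) (expR (t * (-(g1+g2)))) X.
Proof.
apply/matrixP => i j; rewrite mxE.
have -> : (fun N => Re (exp_partial (lindblad g1 g2 g3) t N X i j)) =
  (fun N => Sx t 0 N * Re (E0 X i j) + Sx t (-(g2+g3)) N * Re (E1 X i j)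
   + Sx t (-(g1+g3)) N * Re (E2 X i j) + Sx t (-(g1+g2)) N * Re (E3 X i j)).
  by apply/funext => N; rewrite exp_partialQ ReQ.
have -> : (fun N => Im (exp_partial (lindblad g1 g2 g3) t N X i j)) =
  (fun N => Sx t 0 N * Im (E0 X i j) + Sx t (-(g2+g3)) N * Im (E1 X i j)
   + Sx t (-(g1+g3)) N * Im (E2 X i j) + Sx t (-(g1+g2)) N * Im (E3 X i j)).
  by apply/funext => N; rewrite exp_partialQ ImQ.
rewrite !lim4; apply: cplx_eq'; [rewrite ReQ | rewrite ImQ]; by [].
Qed.
Definition alphaD (c1 c2 c3 p1 q1 p2 q2 p3 q3 : R) :=
  (1 - c1^+2) * (p1^+2 + q1^+2) + (1 - c2^+2) * (p2^+2 + q2^+2) + (1 - c3^+2) * (p3^+2 + q3^+2).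
Definition betaD1 (c1 c2 c3 p1 q1 p2 q2 p3 q3 : R) := - 2 * (c1 - c2 * c3) * (p2 * q3 - p3 * q2).
Definition betaD2 (c1 c2 c3 p1 q1 p2 q2 p3 q3 : R) := - 2 * (c2 - c1 * c3) * (p3 * q1 - p1 * q3).
Definition betaD3 (c1 c2 c3 p1 q1 p2 q2 p3 q3 : R) := - 2 * (c3 - c1 * c2) * (p1 * q2 - p2 * q1).
Definition P1 (b c : R[i]) := (Re b + Re c) / 2.
Definition Q1 (b c : R[i]) := (Im b + Im c) / 2.
Definition P2 (b c : R[i]) := (Im c - Im b) / 2.
Definition Q2 (b c : R[i]) := (Re b - Re c) / 2.
Definition P3 (a d : R[i]) := (Re a - Re d) / 2.
Definition Q3 (a d : R[i]) := (Im a - Im d) / 2.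
Definition Dm (c1 c2 c3 : R) (a b c d : R[i]) :=
  let p1 := P1 b c in let q1 := Q1 b c in let p2 := P2 b c in let q2 := Q2 b c in
  let p3 := P3 a d in let q3 := Q3 a d in
  let al := alphaD c1 c2 c3 p1 q1 p2 q2 p3 q3 in
  let b1 := betaD1 c1 c2 c3 p1 q1 p2 q2 p3 q3 in
  let b2 := betaD2 c1 c2 c3 p1 q1 p2 q2 p3 q3 in
  let b3 := betaD3 c1 c2 c3 p1 q1 p2 q2 p3 q3 in
  mx2 ((al + b3) +i* 0) (b1 +i* (- b2)) (b1 +i* b2) ((al - b3) +i* 0).
Lemma cplx_eqR (z : R[i]) (x y : R) : Re z = x -> Im z = y -> z = x +i* y.
Proof. by case: z => ? ? /= -> ->. Qed.
Lemma Qm_alt m0 m1 m2 m3 (a b c d : R[i]) : Qm m0 m1 m2 m3 (mx2 a b c d) =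
  mx2 (((m0+m3)/2)%:C * a + ((m0-m3)/2)%:C * d)
      (((m1+m2)/2)%:C * b + ((m1-m2)/2)%:C * c)
      (((m1-m2)/2)%:C * b + ((m1+m2)/2)%:C * c)
      (((m0-m3)/2)%:C * a + ((m0+m3)/2)%:C * d).
Proof.
rewrite /Qm !mx2E_all; apply: mx2_congr.
all: rewrite !(rmorphM, rmorphD, rmorphN, fmorphV, rmorph_nat); reflexivity.
Qed.
Lemma conjCr (r : R) : Num.conj (r%:C) = r%:C. Proof. exact: conjc_real. Qed.
Lemma ReCM' (r : R) (z : R[i]) : Re (r%:C * z) = r * Re z. Proof. by case: z => a b /=; rewrite mul0r subr0. Qed.
Lemma ImCM' (r : R) (z : R[i]) : Im (r%:C * z) = r * Im z. Proof. by case: z => a b /=; rewrite mul0r addr0. Qed.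
Lemma conjD' (x y : R[i]) : Num.conj (x + y) = Num.conj x + Num.conj y. Proof. exact: rmorphD. Qed.
Lemma conjCM' (r : R) (z : R[i]) : Num.conj (r%:C * z) = r%:C * Num.conj z.
Proof.
change (conjc (r%:C * z) = r%:C * conjc z).
case: z => x y; apply: cplx_eq => /=; ring.
Qed.
Lemma schwarzD (c1 c2 c3 : R) (a b c d : R[i]) :
  Qm 1 c1 c2 c3 (adj (mx2 a b c d) *m mx2 a b c d)
  - adj (Qm 1 c1 c2 c3 (mx2 a b c d)) *m Qm 1 c1 c2 c3 (mx2 a b c d) = Dm c1 c2 c3 a b c d.
Proof.
rewrite /Dm /alphaD /betaD1 /betaD2 /betaD3 /P1 /Q1 /P2 /Q2 /P3 /Q3.
rewrite mx2_adj !mx2_mul !Qm_alt mx2_adj mx2_mul mx2_opp mx2_add.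
rewrite !conjD' !conjCM'.
apply: mx2_congr; apply cplx_eqR.
all: do 8 (rewrite ?ReD ?ImD ?ReN ?ImN ?ReCM' ?ImCM' ?ReM ?ImM ?ReJ ?ImJ).
all: by field.
Qed.
Lemma real_key (al b1 b2 b3 u1 u2 u3 N : R) : 0 <= al -> b1^+2 + b2^+2 + b3^+2 <= al^+2 ->
  u1^+2 + u2^+2 + u3^+2 = N^+2 -> 0 <= N -> 0 <= al * N + (b1 * u1 + b2 * u2 + b3 * u3).
Proof.
move=> hal hb hu hN.
set S := b1 * u1 + b2 * u2 + b3 * u3.
have CS : S^+2 <= (b1^+2 + b2^+2 + b3^+2) * (u1^+2 + u2^+2 + u3^+2).
  have -> : (b1^+2 + b2^+2 + b3^+2) * (u1^+2 + u2^+2 + u3^+2) =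
    S^+2 + ((b1*u2 - b2*u1)^+2 + (b1*u3 - b3*u1)^+2 + (b2*u3 - b3*u2)^+2) by rewrite /S; ring.
  by rewrite lerDl; apply: addr_ge0; [apply: addr_ge0|]; apply: sqr_ge0.
have h2 : S^+2 <= (al * N)^+2.
  apply: (le_trans CS); rewrite hu exprMn; apply: ler_wpM2r; first exact: sqr_ge0.
  exact: hb.
have h3 : 0 <= al * N by apply: mulr_ge0.
nra.
Qed.
Lemma psd_mx2 (al b1 b2 b3 : R) : 0 <= al -> b1^+2 + b2^+2 + b3^+2 <= al^+2 ->
  psdmx (mx2 ((al + b3) +i* 0) (b1 +i* (- b2)) (b1 +i* b2) ((al - b3) +i* 0)).
Proof.
move=> hal hb v.
rewrite !mxE !big_ord_recl !big_ord0 !mxE !big_ord_recl !big_ord0.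
rewrite lift00 !mx2E_all /adj !mxE !addr0.
move: (v ord0 0) (v ord_max 0) => x y.
set z := (X in 0 <= X).
have -> : z = (al * ((Re x ^+ 2 + Im x ^+ 2) + (Re y ^+ 2 + Im y ^+ 2)) +
   (b1 * (2 * (Re x * Re y + Im x * Im y)) + b2 * (2 * (Re x * Im y - Im x * Re y))
    + b3 * ((Re x ^+ 2 + Im x ^+ 2) - (Re y ^+ 2 + Im y ^+ 2)))) +i* 0.
  rewrite /z; apply: cplx_eqR.
    by do 6 (rewrite ?ReD ?ImD ?ReN ?ImN ?ReM ?ImM ?ReJ ?ImJ ?ReC ?ImC /=); ring.
  by do 6 (rewrite ?ReD ?ImD ?ReN ?ImN ?ReM ?ImM ?ReJ ?ImJ ?ReC ?ImC /=); ring.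
rewrite lecE /= eqxx /=.
apply: real_key => //.
- ring.
- by apply: addr_ge0; apply: addr_ge0; apply: sqr_ge0.
Qed.
Lemma ab_ineq (c1 c2 c3 p1 q1 p2 q2 p3 q3 : R) :
  0 <= 1 - c1^+2 -> 0 <= 1 - c2^+2 -> 0 <= 1 - c3^+2 ->
  (c1 - c2 * c3)^+2 <= (1 - c2^+2) * (1 - c3^+2) ->
  (c2 - c1 * c3)^+2 <= (1 - c1^+2) * (1 - c3^+2) ->
  (c3 - c1 * c2)^+2 <= (1 - c1^+2) * (1 - c2^+2) ->
  let al := (1 - c1^+2) * (p1^+2 + q1^+2) + (1 - c2^+2) * (p2^+2 + q2^+2) + (1 - c3^+2) * (p3^+2 + q3^+2) in
  0 <= al /\
  (- 2 * (c1 - c2 * c3) * (p2 * q3 - p3 * q2))^+2 + (- 2 * (c2 - c1 * c3) * (p3 * q1 - p1 * q3))^+2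
  + (- 2 * (c3 - c1 * c2) * (p1 * q2 - p2 * q1))^+2 <= al^+2.
Proof.
move=> A1 A2 A3 h1 h2 h3 al.
set a1 := 1 - c1^+2 in A1 h2 h3 al *; set a2 := 1 - c2^+2 in A2 h1 h3 al *; set a3 := 1 - c3^+2 in A3 h1 h2 al *.
set w1 := p2 * q3 - p3 * q2; set w2 := p3 * q1 - p1 * q3; set w3 := p1 * q2 - p2 * q1.
set P := a1 * p1^+2 + a2 * p2^+2 + a3 * p3^+2; set Q := a1 * q1^+2 + a2 * q2^+2 + a3 * q3^+2.
have hP : 0 <= P by rewrite /P; apply: addr_ge0; [apply: addr_ge0|]; apply: mulr_ge0 => //; exact: sqr_ge0.
have hQ : 0 <= Q by rewrite /Q; apply: addr_ge0; [apply: addr_ge0|]; apply: mulr_ge0 => //; exact: sqr_ge0.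
have -> : al = P + Q by rewrite /al /P /Q; ring.
split; first exact: addr_ge0.
have e1 : forall (d w : R), (- 2 * d * w)^+2 = 4 * (d^+2 * w^+2) by move=> d w; ring.
rewrite !e1.
have L : a2 * a3 * w1^+2 + a1 * a3 * w2^+2 + a1 * a2 * w3^+2 <= P * Q.
  have -> : P * Q = a2 * a3 * w1^+2 + a1 * a3 * w2^+2 + a1 * a2 * w3^+2
     + (a1 * p1 * q1 + a2 * p2 * q2 + a3 * p3 * q3)^+2 by rewrite /P /Q /w1 /w2 /w3; ring.
  by rewrite lerDl sqr_ge0.
have T : (c1 - c2 * c3)^+2 * w1^+2 + (c2 - c1 * c3)^+2 * w2^+2 + (c3 - c1 * c2)^+2 * w3^+2
   <= a2 * a3 * w1^+2 + a1 * a3 * w2^+2 + a1 * a2 * w3^+2.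
  by apply: lerD; [apply: lerD|]; apply: ler_wpM2r => //; exact: sqr_ge0.
have AM : 4 * (P * Q) <= (P + Q)^+2.
  have -> : (P + Q)^+2 = 4 * (P * Q) + (P - Q)^+2 by ring.
  by rewrite lerDl sqr_ge0.
apply: le_trans AM.
rewrite -!mulrDr ler_pM2l ?ltr0n //.
exact: le_trans T L.
Qed.
Definition Fexp (A B w : R) := (1 - A^+2) * (1 - B^+2) + A^+2 * (1 - B^+2) * (1 - w^+2) + B^+2 * (1 - A^+2) * (1 - w^+2)
       + A^+2 * B^+2 * ((1 - w^+2)^+3 * (1 + w^+2)).
Lemma Fpos (A B w : R) : 0 <= A -> A <= 1 -> 0 <= B -> B <= 1 -> 0 <= w -> w <= 1 ->
  0 <= Fexp A B w.
Proof.
move=> A0 A1 B0 B1 w0 w1.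
have ha : 0 <= 1 - A^+2 by nra.
have hb : 0 <= 1 - B^+2 by nra.
have hu : 0 <= 1 - w^+2 by nra.
rewrite /Fexp.
have sA := sqr_ge0 A; have sB := sqr_ge0 B; have sw := sqr_ge0 w.
apply: addr_ge0; [apply: addr_ge0; [apply: addr_ge0|]|].
- exact: mulr_ge0.
- exact: mulr_ge0 (mulr_ge0 sA hb) hu.
- exact: mulr_ge0 (mulr_ge0 sB ha) hu.
- exact: mulr_ge0 (mulr_ge0 sA sB) (mulr_ge0 (exprn_ge0 3 hu) (addr_ge0 ler01 sw)).
Qed.
Lemma c_ineq (A B w : R) : 0 <= A -> A <= 1 -> 0 <= B -> B <= 1 -> 0 <= w -> w <= 1 ->
  let c1 := B * w in let c2 := A * w in let c3 := A * B * w^+4 in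
  0 <= 1 - c1^+2 /\ 0 <= 1 - c2^+2 /\ 0 <= 1 - c3^+2 /\
  (c1 - c2 * c3)^+2 <= (1 - c2^+2) * (1 - c3^+2) /\
  (c2 - c1 * c3)^+2 <= (1 - c1^+2) * (1 - c3^+2) /\
  (c3 - c1 * c2)^+2 <= (1 - c1^+2) * (1 - c2^+2).
Proof.
move=> A0 A1 B0 B1 w0 w1 c1 c2 c3.
have hF := Fpos A0 A1 B0 B1 w0 w1.
have c10 : 0 <= c1 by apply: mulr_ge0.
have c20 : 0 <= c2 by apply: mulr_ge0.
have w40 : 0 <= w^+4 by apply: exprn_ge0.
have w41 : w^+4 <= 1 by apply: exprn_ile1.
have c30 : 0 <= c3 by rewrite /c3; apply: mulr_ge0 => //; apply: mulr_ge0.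
have c11 : c1 <= 1 by rewrite /c1; nra.
have c21 : c2 <= 1 by rewrite /c2; nra.
have AB1 : A * B <= 1 by nra.
have c31 : c3 <= 1 by rewrite /c3; nra.
split; [nra|split; [nra|split; [nra|split; [|split]]]].
- rewrite -subr_ge0; suff -> : (1 - c2^+2) * (1 - c3^+2) - (c1 - c2 * c3)^+2 = Fexp A B w by [].
  by rewrite /Fexp /c1 /c2 /c3; ring.
- rewrite -subr_ge0; suff -> : (1 - c1^+2) * (1 - c3^+2) - (c2 - c1 * c3)^+2 = Fexp A B w by [].
  by rewrite /Fexp /c1 /c2 /c3; ring.
- rewrite -subr_ge0; suff -> : (1 - c1^+2) * (1 - c2^+2) - (c3 - c1 * c2)^+2 = Fexp A B w by [].
  by rewrite /Fexp /c1 /c2 /c3; ring.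
Qed.

Lemma expfacts (g1 g2 g3 t : R) :
  g3 < 0 -> 2 * `|g3| <= g1 -> 2 * `|g3| <= g2 -> 0 <= t ->
  let w := expR (t * g3) in let A := expR (- (t * (g1 + 2 * g3))) in
  let B := expR (- (t * (g2 + 2 * g3))) in
  [/\ expR (t * (-(g2+g3))) = B * w, expR (t * (-(g1+g3))) = A * w,
     expR (t * (-(g1+g2))) = A * B * w^+4 &
     [/\ 0 <= A, A <= 1, 0 <= B, B <= 1 & (0 <= w /\ w <= 1)]].
Proof.
move=> hg3 hg1 hg2 ht w A B.
have ag3 : `|g3| = - g3 by rewrite ltr0_norm.
rewrite ag3 in hg1 hg2.
split.
- by rewrite /B /w -expRD; congr expR; ring.
- by rewrite /A /w -expRD; congr expR; ring.
- by rewrite /A /B /w -expRM_natl -!expRD; congr expR; ring.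
split; rewrite ?expR_ge0 ?expR_le1 //.
- rewrite oppr_le0; apply: mulr_ge0 => //; lra.
- rewrite oppr_le0; apply: mulr_ge0 => //; lra.
- split; rewrite ?expR_ge0 ?expR_le1 //. nra.
Qed.
End S.

Local Close Scope complex_scope.
Local Close Scope classical_set_scope.

Theorem mainTheorem4 (R : realType) (g1 g2 g3 : R) :
  g3 < 0 -> 2 * `|g3| <= g1 -> 2 * `|g3| <= g2 ->
  forall t : R, 0 <= t -> unital_schwarz (expL (lindblad g1 g2 g3) t).
Proof.
move=> hg3 hg1 hg2 t ht.
have E : expL (lindblad g1 g2 g3) t =
  Qm 1 (expR (t * (-(g2+g3)))) (expR (t * (-(g1+g3)))) (expR (t * (-(g1+g2)))).
  by apply/funext => X; exact: expLQ.
rewrite E.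
have [e1 e2 e3 [A0 A1 B0 B1 [w0 w1]]] := expfacts hg3 hg1 hg2 ht.
move: (expR (t * (-(g2+g3)))) (expR (t * (-(g1+g3)))) (expR (t * (-(g1+g2)))) e1 e2 e3 => c1 c2 c3 e1 e2 e3.
have [h1 [h2 [h3 [h4 [h5 h6]]]]] := c_ineq A0 A1 B0 B1 w0 w1.
rewrite -e1 -e2 -e3 in h1 h2 h3 h4 h5 h6.
split; first exact: QmlinX.
split; first exact: Qm_unit.
move=> X; rewrite /mx_ge [X]mx2E schwarzD /Dm.
set a := X ord0 ord0; set b := X ord0 ord_max; set c := X ord_max ord0; set d := X ord_max ord_max.
have [ha hb] := ab_ineq (P1 b c) (Q1 b c) (P2 b c) (Q2 b c) (P3 a d) (Q3 a d) h1 h2 h3 h4 h5 h6.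
by apply: psd_mx2; rewrite /alphaD /betaD1 /betaD2 /betaD3.
Qed.
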